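(* Let $p$ be a prime, let $n\in\mathbb{N}$ and set $q=p^n$. The number of solutions $(a_2,a_3,a_4,b_2,b_3,b_4)\in(\mathbb{Z}/q\mathbb{Z})^6$ to the system \[ a_2b_3-a_3b_2 = a_2b_4-a_4b_2 = a_3b_4-a_4b_3 = 0 \] which additionally satisfy $a_2b_3=a_3b_2=0$ is $O(n^2q^{7/2})$, with an absolute implied constant. *)

(* Defs.v *)
From mathcomp Require Import all_boot all_algebra.
Set Implicit Arguments. Unset Strict Implicit. Unset Printing Implicit Defensive.
Import GRing.Theory.

(* Six-tuples (a2,a3,a4,b2,b3,b4) over Z/qZ; 'Z_q is Z/qZ for q >= 2. *)
Definition six (q : nat) : finType := ('Z_q * 'Z_q * 'Z_q * 'Z_q * 'Z_q * 'Z_q)%type.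

Definition good_sol (q : nat) (x : six q) : bool :=
  let: (a2, a3, a4, b2, b3, b4) := x in
  let z : 'Z_q := 0%R in
  [&& (a2 * b3 - a3 * b2 == z)%R, (a2 * b4 - a4 * b2 == z)%R,
      (a3 * b4 - a4 * b3 == z)%R, (a2 * b3 == z)%R & (a3 * b2 == z)%R].

Definition num_good (q : nat) : nat := #|[pred x : six q | good_sol x]|.

(* Main.v *)
Require Import Defs.
From mathcomp Require Import all_boot all_algebra.
From mathcomp Require Import all_order ring lra zify.
From mathcomp Require Import Rstruct.
Set Implicit Arguments. Unset Strict Implicit. Unset Printing Implicit Defensive.
Import Order.TTheory GRing.Theory Num.Theory.
Local Open Scope ring_scope.

Lemma sum_bool (I : finType) (P : pred I) : (\sum_i (P i : nat))%N = #|P|.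
Proof.
rewrite -sum1_card [RHS]big_mkcond; apply: eq_bigr => i _.
by rewrite unfold_in; case: (P i).
Qed.

Section Zm.
Variable k : nat.
Local Notation M := k.+2.
Local Notation T := 'I_M.

Lemma mul0E (x y : T) : ((x * y)%R == 0%R) = (M %| x * y)%N.
Proof. by rewrite -val_eqE. Qed.

Definition G (x : T) := gcdn x M.

Lemma G_gt0 x : (0 < G x)%N.
Proof. by rewrite /G gcdn_gt0 orbT. Qed.

Lemma annih (a : T) : (#|[pred z : T | (a * z == 0)%R]| <= G a)%N.
Proof.
set g := G a. set d := (M %/ g)%N.
have gM : (g %| M)%N by exact: dvdn_gcdr.
have Md : M = (d * g)%N by rewrite divnK.
have dz : forall z : T, (a * z == 0)%R -> (d %| z)%N.
  move=> z; rewrite mul0E => H.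
  have H2 : (M %| g * z)%N.
    by rewrite /g /G muln_gcdl dvdn_gcd H dvdn_mulr.
  by move: H2; rewrite {1}Md mulnC dvdn_pmul2l ?G_gt0.
have d0 : (0 < d)%N by rewrite divn_gt0 ?G_gt0 // dvdn_leq.
rewrite cardE -(size_map (fun z : T => (z %/ d)%N)).
rewrite -(size_iota 0 g); apply: uniq_leq_size.
  rewrite map_inj_in_uniq ?enum_uniq // => z1 z2.
  rewrite !mem_enum !inE => H1 H2 E.
  apply: ord_inj; rewrite -(divnK (dz _ H1)) -(divnK (dz _ H2)) E //.
move=> w /mapP [z]; rewrite mem_enum inE => H ->.
rewrite mem_iota add0n /= ltn_divLR // mulnC -Md.
exact: ltn_ord.
Qed.

Lemma lin (a c : T) : (#|[pred y : T | (a * y == c)%R]| <= G a)%N.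
Proof.
case: (pickP [pred y : T | a * y == c]) => [y0 Hy0|H]; last first.
  rewrite (_ : #|_| = 0%N) //; apply: eq_card0 => y; exact: (H y).
apply: leq_trans (annih a).
rewrite -(card_image (addIr (- y0)) [pred y : T | a * y == c]).
apply: subset_leq_card; apply/subsetP => _ /imageP [y Hy ->].
move: Hy Hy0; rewrite !inE => /eqP Hy /eqP Hy0.
by rewrite mulrDr Hy mulrN Hy0 subrr.
Qed.

Lemma pairs (a b : T) (P : T -> T -> bool)
  (HP : forall x y, P x y -> (a * y - x * b == 0)%R) :
  (\sum_x \sum_y (P x y : nat) <= M * G a)%N /\
  (\sum_x \sum_y (P x y : nat) <= M * G b)%N.
Proof.
split.
  apply: (@leq_trans (\sum_(x : T) G a)); last by rewrite sum_nat_const card_ord.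
  apply: leq_sum => x _.
  apply: leq_trans (lin a (x * b)).
  rewrite -sum_bool; apply: leq_sum => y _.
  case E: (P x y) => //=; move: (HP _ _ E).
  by rewrite subr_eq0 => ->.
rewrite exchange_big /=.
apply: (@leq_trans (\sum_(x : T) G b)); last by rewrite sum_nat_const card_ord.
apply: leq_sum => y _.
apply: leq_trans (lin b (a * y)).
rewrite -sum_bool; apply: leq_sum => x _.
case E: (P x y) => //=; move: (HP _ _ E).
by rewrite subr_eq0 mulrC => /eqP ->; rewrite mulrC eqxx.
Qed.

End Zm.


Section Val.
Variables k p n : nat.
Hypothesis pr : prime p.
Hypothesis HM : k.+2 = (p ^ n)%N.
Local Notation M := k.+2.
Local Notation T := 'I_M.

Definition v (x : T) := logn p (G x).

Lemma Gv x : G x = (p ^ v x)%N /\ (v x <= n)%N.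
Proof.
have : (G x %| p ^ n)%N by rewrite -HM /G dvdn_gcdr.
case/(dvdn_pfactor _ _ pr) => e le GE.
rewrite /v GE pfactorK //.

Qed.

Lemma vsum (x y : T) : (x * y == 0)%R -> (n <= v x + v y)%N.
Proof.
rewrite mul0E => H.
have H2 : (M %| G x * G y)%N.
  rewrite /G muln_gcdl dvdn_gcd (dvdn_mulr _ (dvdnn M)) andbT.
  by rewrite muln_gcdr dvdn_gcd H dvdn_mull.
move: H2; rewrite (proj1 (Gv x)) (proj1 (Gv y)) -expnD HM.
by rewrite dvdn_Pexp2l // prime_gt1.
Qed.

Lemma card_v (j : nat) : (#|[pred x : T | v x == j]| <= p ^ (n - j))%N.
Proof.
have p0 : (0 < p ^ j)%N by rewrite expn_gt0 prime_gt0.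
have dz : forall x : T, v x == j -> (p ^ j %| x)%N.
  by move=> x /eqP <-; rewrite -(proj1 (Gv x)) /G dvdn_gcdl.
rewrite cardE -(size_map (fun z : T => (z %/ p ^ j)%N)).
rewrite -(size_iota 0 (p ^ (n - j))); apply: uniq_leq_size.
  rewrite map_inj_in_uniq ?enum_uniq // => z1 z2.
  rewrite !mem_enum !inE => H1 H2 E.
  by apply: ord_inj; rewrite -(divnK (dz _ H1)) -(divnK (dz _ H2)) E.
move=> w /mapP [z]; rewrite mem_enum inE => H ->.
rewrite mem_iota add0n /= ltn_divLR // -expnD subnK.
  by rewrite -HM ltn_ord.
by rewrite -(eqP H); exact: (proj2 (Gv z)).
Qed.

End Val.


Lemma geom (R : realFieldType) (r : R) (r0 : 0 <= r) (r1 : 3 * r <= 2) (k0 N : nat) :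
  \sum_(j < N) (((k0 <= j)%N)%:R * r ^+ (j - k0)) + 3 * r ^+ (N - k0) <= 3.
Proof.
elim: N => [|N IH]; first by rewrite big_ord0 sub0n expr0 add0r mulr1.
rewrite big_ord_recr /=.
case: (leqP k0 N) => H.
  rewrite subSn // /= mulr1n mul1r exprS.
  have ra : 0 <= r ^+ (N - k0) by exact: exprn_ge0.
  set S := \sum_(i < N) _ in IH *.
  set a := r ^+ (N - k0) in IH ra *.
  nra.
rewrite /= mulr0n mul0r addr0.
have E1 : (N.+1 - k0 = 0)%N by apply/eqP; rewrite subn_eq0.
have E2 : (N - k0 = 0)%N by apply/eqP; rewrite subn_eq0 ltnW.
by rewrite E1; rewrite E2 in IH.
Qed.

Section Real.
Variable R : realFieldType.
Variables p n : nat.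
Hypothesis pr : prime p.
Variable t : R.
Hypothesis t0 : 0 <= t.
Hypothesis t4 : t ^+ 4 = p%:R.

Lemma p_ge2 : 2 <= p%:R :> R.
Proof. by rewrite ler_nat prime_gt1. Qed.

Lemma p_gt0 : 0 < p%:R :> R.
Proof. have := p_ge2; lra. Qed.

Lemma t3 : 3 <= 2 * t ^+ 3.
Proof.
have u0 : 0 <= 2 * t ^+ 3 by rewrite mulr_ge0 // exprn_ge0.
rewrite -(ler_pXn2r (_ : 0 < 4)%N) ?nnegrE //.
have -> : (2 * t ^+ 3) ^+ 4 = 16 * (t ^+ 4) ^+ 3.
  rewrite exprMn -!exprM (mulnC 3 4); congr (_ * _).
  by rewrite !exprS expr0; lra.
rewrite t4.
have := p_ge2 => h.
have h3 : 8 <= (p%:R : R) ^+ 3.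
  have -> : (8 : R) = 2 ^+ 3 by rewrite !exprS expr0; lra.
  by rewrite ler_pXn2r ?nnegrE //; lra.
apply: (@le_trans _ _ 81); first by rewrite !exprS expr0; lra.
lra.
Qed.

Definition r := t / p%:R.

Lemma r0 : 0 <= r.
Proof. by rewrite /r divr_ge0 // ltW // p_gt0. Qed.

Lemma r1 : 3 * r <= 2.
Proof.
rewrite /r mulrA ler_pdivrMr ?p_gt0 // -t4.
have := t3.
have -> : t ^+ 4 = t * t ^+ 3 by rewrite exprS.
nra.
Qed.


Variable k : nat.
Hypothesis HM : k.+2 = (p ^ n)%N.
Local Notation M := k.+2.
Local Notation T := 'I_M.
Local Notation vv := (@v k p).

Lemma partition (F : nat -> R) (F0 : forall j, 0 <= F j) :
  \sum_(x : T) F (vv x) <= \sum_(j < n.+1) (p ^ (n - j))%:R * F j.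
Proof.
have E : forall x, F (vv x) = \sum_(j < n.+1) (((vv x == j) : nat)%:R * F j).
  move=> x; have Hx : (vv x < n.+1)%N by rewrite ltnS (proj2 (Gv pr HM x)).
  rewrite (bigD1 (Ordinal Hx)) //= eqxx mulr1n mul1r big1 ?addr0 // => j Hj.
  rewrite (_ : (vv x == j) = false) ?mulr0n ?mul0r //; apply/negbTE.
  apply: contra Hj => /eqP H; apply/eqP; apply: ord_inj => /=; by rewrite H.
rewrite (eq_bigr _ (fun x _ => E x)) exchange_big /=; apply: ler_sum => j _.
rewrite -mulr_suml; apply: ler_wpM2r => //.
rewrite -natr_sum ler_nat sum_bool.
exact: (card_v pr HM j).
Qed.

Lemma bound1 (k0 : nat) : (k0 <= n)%N ->
  \sum_(j < n.+1) (p ^ (n - j))%:R * (((k0 <= j)%N)%:R * t ^+ j)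
    <= 3 * (p ^ (n - k0))%:R * t ^+ k0.
Proof.
move=> kn.
have E : forall j : 'I_n.+1, (p ^ (n - j))%:R * (((k0 <= j)%N)%:R * t ^+ j)
   = (p ^ (n - k0))%:R * t ^+ k0 * (((k0 <= j)%N)%:R * r ^+ (j - k0)).
  move=> j; case: (leqP k0 j) => H; last by rewrite /= !mul0r !mulr0.
  rewrite /= !mul1r.
  have jn : (j <= n)%N by rewrite -ltnS ltn_ord.
  have -> : (n - k0 = (n - j) + (j - k0))%N by rewrite addnBA // subnK.
  have -> : t ^+ j = t ^+ k0 * t ^+ (j - k0) by rewrite -exprD subnKC.
  rewrite expnD natrM /r expr_div_n !natrX.
  have : (p%:R : R) ^+ (j - k0) != 0 by rewrite expf_neq0 // gt_eqF // p_gt0.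
  move=> nz.
  by field.
rewrite (eq_bigr _ (fun j _ => E j)) -mulr_sumr.
have g := geom r0 r1 k0 n.+1.
have : 0 <= 3 * r ^+ (n.+1 - k0) by rewrite mulr_ge0 // exprn_ge0 // r0.
have : 0 <= (p ^ (n - k0))%:R * t ^+ k0 :> R by rewrite mulr_ge0 // exprn_ge0.
set S := \sum_(i < n.+1) _ in g *.
nra.
Qed.


Lemma Sbound :
  \sum_(x : T) \sum_(y : T) (((x * y == 0) : bool) : nat)%:R * t ^+ (vv x + vv y)
   <= 3 * (n.+1)%:R * t ^+ (5 * n).
Proof.
apply: (@le_trans _ _ (\sum_(x : T) 3 * t ^+ n * (p ^ vv x)%:R)).
  apply: ler_sum => x _.
  have vxn := proj2 (Gv pr HM x).
  pose F j := ((n - vv x <= j)%N)%:R * t ^+ j.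
  have F0 : forall j, 0 <= F j by move=> j; rewrite /F mulr_ge0 // exprn_ge0.
  apply: (@le_trans _ _ (t ^+ (vv x) * \sum_(y : T) F (vv y))).
    rewrite mulr_sumr; apply: ler_sum => y _.
    case E: (x * y == 0) => /=.
      have h := vsum pr HM E.
      rewrite /F (_ : (n - vv x <= vv y)%N) ?leq_subLR // /= !mul1r exprD //.
    by rewrite mul0r mulr_ge0 // exprn_ge0.
  apply: le_trans (ler_wpM2l (exprn_ge0 _ t0) (partition F0)) _.
  apply: le_trans (ler_wpM2l (exprn_ge0 _ t0) (bound1 (leq_subr (vv x) n))) _.
  rewrite subKn // natrX.
  have -> : t ^+ n = t ^+ (vv x) * t ^+ (n - vv x) by rewrite -exprD subnKC.
  rewrite le_eqVlt; apply/orP; left; apply/eqP; ring.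
rewrite -mulr_sumr.
have P := @partition (fun j => (p ^ j)%:R) (fun j => ler0n _ _).
apply: le_trans (ler_wpM2l _ P) _.
  by rewrite mulr_ge0 // exprn_ge0.
rewrite /=.
have -> : \sum_(j < n.+1) (p ^ (n - j))%:R * (p ^ j)%:R = \sum_(j < n.+1) (p ^ n)%:R :> R.
  apply: eq_bigr => j _; rewrite -natrM -expnD subnK //.
  by rewrite -ltnS ltn_ord.
rewrite sumr_const card_ord -mulr_natr natrX -t4 -exprM.
have -> : (5 * n = n + 4 * n)%N by rewrite -{2}(mul1n n) -mulnDl.
rewrite exprD mulnC.
rewrite le_eqVlt; apply/orP; left; apply/eqP; ring.
Qed.

End Real.


Lemma sum_six (q : nat) (f : six q -> nat) :
  (\sum_(x : six q) f x =
  \sum_a2 \sum_b3 \sum_a3 \sum_b2 \sum_a4 \sum_b4 f (a2, a3, a4, b2, b3, b4))%N.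
Proof.
have E : (\sum_(x : six q) f x =
  \sum_a2 \sum_a3 \sum_a4 \sum_b2 \sum_b3 \sum_b4 f (a2, a3, a4, b2, b3, b4))%N.
  by rewrite !pair_bigA /=; apply: eq_bigr => -[[[[[? ?] ?] ?] ?] ?].
rewrite E; apply: eq_bigr => a2 _.
rewrite (eq_bigr (fun a3 => \sum_b2 \sum_b3 \sum_a4 \sum_b4 f (a2, a3, a4, b2, b3, b4))%N).
  rewrite (eq_bigr (fun a3 => \sum_b3 \sum_b2 \sum_a4 \sum_b4 f (a2, a3, a4, b2, b3, b4))%N).
    by rewrite exchange_big.
  by move=> a3 _; rewrite exchange_big.
move=> a3 _; rewrite exchange_big; apply: eq_bigr => b2 _.
by rewrite exchange_big.
Qed.

Lemma fourth (R : realFieldType) (X A B C D : nat) :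
  (X <= A)%N -> (X <= B)%N -> (X <= C)%N -> (X <= D)%N ->
  (X%:R : R) ^+ 4 <= (A * B * C * D)%:R.
Proof.
move=> hA hB hC hD.
rewrite -natrX ler_nat (_ : (X ^ 4 = X * X * X * X)%N); last first.
  by rewrite !expnS expn0 muln1 !mulnA.
by rewrite (leq_mul (leq_mul (leq_mul hA hB) hC) hD).
Qed.

Section Final.
Variable R : realFieldType.
Variables p n : nat.
Hypothesis pr : prime p.
Hypothesis n0 : (0 < n)%N.
Variable t : R.
Hypothesis t0 : 0 <= t.
Hypothesis t4 : t ^+ 4 = p%:R.
Local Notation q := (p ^ n)%N.
Local Notation k := (Zp_trunc q).
Local Notation T := 'Z_q.

Lemma HM : k.+2 = q.
Proof.
apply: Zp_cast.
by rewrite -{1}(expn0 p) ltn_exp2l // prime_gt1.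
Qed.

Local Notation vv := (@v k p).

Lemma inner (a2 b3 a3 b2 : T) :
  ((\sum_a4 \sum_b4 (good_sol (a2, a3, a4, b2, b3, b4) : nat))%N%:R : R)
  <= (((a2 * b3 == 0) : bool) : nat)%:R * t ^+ (vv a2 + vv b3) *
     ((((a3 * b2 == 0) : bool) : nat)%:R * t ^+ (vv a3 + vv b2)) * q%:R.
Proof.
case E1: (a2 * b3 == 0); last first.
  rewrite big1; first by rewrite /= !(mul0r, mulr0).
  move=> a4 _; rewrite big1 // => b4 _.
  by rewrite /good_sol E1 /= !andbF.
case E2: (a3 * b2 == 0); last first.
  rewrite big1; first by rewrite /= !(mul0r, mulr0).
  move=> a4 _; rewrite big1 // => b4 _.
  by rewrite /good_sol E2 /= !andbF.
rewrite /= !mul1r.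
set X := (\sum_a4 _)%N.
pose P := fun x y : T => good_sol (a2, a3, x, b2, b3, y).
have [h1 h2] := pairs (a := a2) (b := b2) (P := P)
  (fun x y (H : P x y) => ltac:(by move: H; rewrite /P /good_sol => /and5P [])).
have [h3 h4] := pairs (a := a3) (b := b3) (P := P)
  (fun x y (H : P x y) => ltac:(by move: H; rewrite /P /good_sol => /and5P [])).
have F := fourth R h1 h2 h3 h4.
have Xpos : 0 <= (X%:R : R) by [].
have Rpos : 0 <= t ^+ (vv a2 + vv b3) * t ^+ (vv a3 + vv b2) * q%:R.
  by rewrite !mulr_ge0 // exprn_ge0.
rewrite -(ler_pXn2r (_ : 0 < 4)%N) ?nnegrE //.
apply: (le_trans F).
rewrite (proj1 (Gv pr HM a2)) (proj1 (Gv pr HM b2)).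
rewrite (proj1 (Gv pr HM a3)) (proj1 (Gv pr HM b3)).
rewrite HM !natrM !natrX -t4 -!exprM.
rewrite le_eqVlt; apply/orP; left; apply/eqP.
rewrite !exprMn -!exprM -!exprD; congr (_ ^+ _).
lia.
Qed.

Lemma main_bound : ((num_good q)%:R : R) <= 36 * (n ^ 2)%N%:R * t ^+ (14 * n).
Proof.
rewrite /num_good -(@sum_bool _ [pred x | good_sol x]) sum_six.
pose f (x y : T) := (((x * y == 0) : bool) : nat)%:R * t ^+ (vv x + vv y) : R.
apply: (@le_trans _ _ (\sum_a2 \sum_b3 \sum_a3 \sum_b2 (f a2 b3 * f a3 b2 * q%:R))).
  rewrite natr_sum; apply: ler_sum => a2 _; rewrite natr_sum; apply: ler_sum => b3 _.
  rewrite natr_sum; apply: ler_sum => a3 _; rewrite natr_sum; apply: ler_sum => b2 _.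
  exact: inner.
have E : \sum_a2 \sum_b3 \sum_a3 \sum_b2 (f a2 b3 * f a3 b2 * q%:R)
   = (\sum_a2 \sum_b3 f a2 b3) * (\sum_a3 \sum_b2 f a3 b2) * q%:R.
  rewrite !mulr_suml; apply: eq_bigr => a2 _; rewrite !mulr_suml; apply: eq_bigr => b3 _.
  rewrite -mulrA !mulr_suml mulr_sumr; apply: eq_bigr => a3 _.
  rewrite !mulr_suml mulr_sumr; apply: eq_bigr => b2 _.
  by rewrite mulrA.
rewrite E.
have hS := Sbound pr t0 t4 HM.
set S := \sum_a2 \sum_b3 f a2 b3.
have hS' : S <= 3 * (n.+1)%:R * t ^+ (5 * n) by exact: hS.
have S0 : 0 <= S by rewrite sumr_ge0 // => i _; rewrite sumr_ge0 // => j _; rewrite /f mulr_ge0 // exprn_ge0.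
have qE : q%:R = t ^+ (4 * n) :> R by rewrite natrX -t4 -exprM.
have tE : t ^+ (14 * n) = t ^+ (5 * n) * t ^+ (5 * n) * t ^+ (4 * n).
  by rewrite -!exprD; congr (_ ^+ _); lia.
have nE : (n.+1)%:R = n%:R + 1 :> R by rewrite natr1.
have n2E : (n ^ 2)%N%:R = n%:R ^+ 2 :> R by rewrite natrX.
rewrite qE tE n2E; rewrite nE in hS'.
set a := t ^+ (5 * n) in hS' *. set b := t ^+ (4 * n).
have a0 : 0 <= a by exact: exprn_ge0.
have b0 : 0 <= b by exact: exprn_ge0.
have N1 : 1 <= (n%:R : R) by rewrite ler1n.
set N := (n%:R : R) in hS' N1 *.
have h1 : S * S <= 36 * N ^+ 2 * (a * a).
  have h2 : S * S <= (3 * (N + 1) * a) * (3 * (N + 1) * a).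
    have h3 : 0 <= 3 * (N + 1) * a by rewrite !mulr_ge0 //; lra.
    nra.
  apply: le_trans h2 _.
  have : 0 <= a * a by rewrite mulr_ge0.
  rewrite expr2.
  have hN : (N+1)*(N+1) <= 4*(N*N) by nra.
  have := ler_wpM2r (mulr_ge0 a0 a0) hN.
  nra.
have : S * S * b <= 36 * N ^+ 2 * (a * a) * b by rewrite ler_wpM2r.
by rewrite !mulrA.
Qed.

End Final.


Lemma final_mc (p n : nat) : prime p -> (0 < n)%N ->
  ((num_good (p ^ n))%:R : Rdefinitions.R) <=
   36%:R * (n ^ 2)%N%:R * (p ^ n)%N%:R ^+ 3 * Num.sqrt ((p ^ n)%N%:R).
Proof.
move=> pr n0.
set t := Num.sqrt (Num.sqrt (p%:R : Rdefinitions.R)).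
have t0 : 0 <= t by exact: sqrtr_ge0.
have t4 : t ^+ 4 = p%:R.
  rewrite (_ : 4%N = (2 * 2)%N) // exprM sqr_sqrtr ?sqrtr_ge0 // sqr_sqrtr //.
have H := main_bound pr n0 t0 t4.
apply: (le_trans H).
have qE : (p ^ n)%N%:R = t ^+ (4 * n) :> Rdefinitions.R by rewrite natrX -t4 -exprM.
rewrite qE.
have -> : t ^+ (4 * n) = (t ^+ (2 * n)) ^+ 2 by rewrite -exprM; congr (_ ^+ _); lia.
rewrite sqrtr_sqr ger0_norm ?exprn_ge0 // -!exprM le_eqVlt; apply/orP; left; apply/eqP.
rewrite -!mulrA -exprD; congr (_ * (_ * _ ^+ _)); lia.
Qed.

Local Close Scope ring_scope.
From Stdlib Require Import Reals.

Theorem lemma5p2 :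
  exists C : R, forall p n : nat, prime p -> (0 < n)%N ->
    (INR (num_good (p ^ n)) <=
       C * INR (n ^ 2) * INR (p ^ n) ^ 3 * sqrt (INR (p ^ n)))%R.
Proof.
exists (INR 36) => p n pr n0.
rewrite !INRE !RpowE RsqrtE !RmultE.
apply/RleP.
have E : forall a b : nat, Nat.pow a b = expn a b.
  by move=> a; elim=> [|b IH] //; rewrite expnS -IH.
rewrite !E.
exact: final_mc.
Qed.
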